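(* Let $G$ be a $2K_2$-free graph on $n$ vertices, and let $\alpha(G)$ be its independence number. Then the set $\{x\in V(G) \mid d_G(x)\le \frac{n-\alpha(G)}{2}\}$ is an independent set in $G$.
   Context: All graphs are finite, simple and undirected. A graph is $2K_2$-free if it does not contain $2K_2$ (the graph on four vertices consisting of two independent edges) as an induced subgraph. $d_G(x)$ is the degree of $x$ in $G$ and $\alpha(G)$ is the maximum size of an independent set in $G$. *)

(* Defs.v *)
From mathcomp Require Import all_boot.
Set Implicit Arguments. Unset Strict Implicit. Unset Printing Implicit Defensive.

Definition simple_graph (T : finType) (e : rel T) : Prop :=
  symmetric e /\ irreflexive e.

Definition degree (T : finType) (e : rel T) (x : T) : nat := #|[set y | e x y]|.

Definition independent (T : finType) (e : rel T) (S : {set T}) : bool :=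
  [forall x in S, forall y in S, ~~ e x y].

Definition alpha (T : finType) (e : rel T) : nat :=
  \max_(S : {set T} | independent e S) #|S|.

Definition twoK2_free (T : finType) (e : rel T) : Prop :=
  forall a b c d : T,
    uniq [:: a; b; c; d] -> e a b -> e c d ->
    e a c || e a d || e b c || e b d.

(* Main.v *)
Require Import Defs.
From mathcomp Require Import all_boot.
From mathcomp Require Import zify.

Theorem lemma10 (T : finType) (e : rel T) :
  simple_graph e -> twoK2_free e ->
  independent e [set x | 2 * degree e x <= #|T| - alpha e].
Proof.
move=> [esym eirr] free.
apply/forallP=> x; apply/implyP; rewrite inE => hx.
apply/forallP=> y; apply/implyP; rewrite inE => hy.
apply/negP=> exy.
have eyx : e y x by rewrite esym.
set W := ~: ([set z | e x z] :|: [set z | e y z]).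
have xW : x \notin W by rewrite !inE eyx orbT.
have indep : independent e (x |: W).
  apply/forallP=> a; apply/implyP=> ha; apply/forallP=> b; apply/implyP=> hb.
  apply/negP=> eab.
  move: ha hb; rewrite !inE.
  case/orP=> [/eqP ?|ha]; case/orP=> [/eqP ?|hb]; subst.
  - by rewrite eirr in eab.
  - by move: hb; rewrite eab.
  - by move: ha; rewrite esym eab.
  move: ha hb; rewrite !negb_or => /andP[xa ya] /andP[xb yb].
  have := free x y a b.
  have ab : a != b by apply: contraTneq eab => ->; rewrite eirr.
  have xa' : x != a by apply: contraNneq ya => <-; rewrite eyx.
  have xb' : x != b by apply: contraNneq yb => <-; rewrite eyx.
  have ya' : y != a by apply: contraNneq xa => <-; rewrite exy.
  have yb' : y != b by apply: contraNneq xb => <-; rewrite exy.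
  have xy : x != y by apply: contraTneq exy => ->; rewrite eirr.
  rewrite /= !inE !negb_or xy xa' xb' ya' yb' ab /= => /(_ isT exy eab).
  by rewrite (negbTE xa) (negbTE xb) (negbTE ya) (negbTE yb).
have le1 : #|x |: W| <= alpha e by exact: (@leq_bigmax_cond _ (fun S => independent e S) (fun S => #|S|) _ indep).
rewrite cardsU1 xW /= in le1.
have hW : #|W| = #|T| - #|[set z | e x z] :|: [set z | e y z]| by rewrite cardsCs setCK.
have hU := cardsU [set z | e x z] [set z | e y z].
have dx : 0 < degree e x.
  by rewrite /degree card_gt0; apply/set0Pn; exists y; rewrite inE.
move: hx hy; rewrite /degree => hx hy.
move: le1 hW hU dx hx hy. rewrite /degree. lia.
Qed.
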